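(* The law $\mathrm{x}\simeq \mathrm{y}\diamond(\mathrm{y}\diamond(\mathrm{x}\diamond\mathrm{y}))$ does not imply the law $\mathrm{x}\diamond(\mathrm{x}\diamond\mathrm{x})\simeq(\mathrm{x}\diamond\mathrm{x})\diamond\mathrm{x}$; that is, there exists a magma satisfying the first law but not the second.
   Context: A magma is a set with a binary operation $\diamond$; it satisfies a law if the identity holds for all assignments of the variables to elements of the magma. *)

(* Defs.v *)
Definition law1 {M : Type} (op : M -> M -> M) : Prop :=
  forall x y : M, x = op y (op y (op x y)).

Definition law2 {M : Type} (op : M -> M -> M) : Prop :=
  forall x : M, op x (op x x) = op (op x x) x.

(* Main.v *)
Require Import Defs.
From Stdlib Require Import Arith Lia.

Inductive T : Type := At | Nd (l r : T).

Definition eqT : forall x y : T, {x = y} + {x <> y}.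
Proof. decide equality. Defined.

Fixpoint F (b z : T) {struct z} : T :=
  match z with
  | At => Nd b At
  | Nd b' w =>
    if eqT b b' then
      match (match w with
             | Nd a0 _ => if eqT (F a0 b') w then Some a0 else None
             | At => None end) with
      | Some a0 => a0
      | None =>
        match b' with
        | Nd a1 _ => if eqT (F a1 b') w then a1 else Nd b z
        | At => Nd b z
        end
      end
    else Nd b z
  end.

Fixpoint size (t : T) : nat :=
  match t with At => 1 | Nd l r => S (size l + size r) end.

Lemma Dpp : forall x z, F x z = Nd x z \/
  (exists w, z = Nd x w /\ F (F x z) x = w /\ size (F x z) < size z).
Proof.
  intros x z. destruct z as [|b' w]; [left; reflexivity|].
  simpl. destruct (eqT x b') as [<-|Hne]; [|left; reflexivity].
  destruct w as [|a0 r0].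
  - destruct x as [|a1 r1]; [left; reflexivity|].
    destruct (eqT (F a1 (Nd a1 r1)) At) as [He|He]; [|left; reflexivity].
    right. exists At. split; [reflexivity|]. split; [exact He|]. simpl. lia.
  - destruct (eqT (F a0 x) (Nd a0 r0)) as [He|He].
    + right. exists (Nd a0 r0). split; [reflexivity|]. split; [exact He|]. simpl. lia.
    + destruct x as [|a1 r1]; [left; reflexivity|].
      destruct (eqT (F a1 (Nd a1 r1)) (Nd a0 r0)) as [He2|He2]; [|left; reflexivity].
      right. exists (Nd a0 r0). split; [reflexivity|]. split; [exact He2|]. simpl. lia.
Qed.

Lemma inj : forall x y b, F x b = F y b -> x = y.
Proof.
  intros x y b H.
  destruct (Dpp x b) as [Hx|[w [Ew [_ Sx]]]];
  destruct (Dpp y b) as [Hy|[w' [Ew' [_ Sy]]]].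
  - rewrite Hx, Hy in H. injection H; auto.
  - rewrite Hx in H. rewrite <- H in Sy. simpl in Sy. lia.
  - rewrite Hy in H. rewrite H in Sx. simpl in Sx. lia.
  - rewrite Ew in Ew'. injection Ew'; auto.
Qed.

Lemma noDec : forall a b, F b (F a b) = Nd b (F a b).
Proof.
  intros a b.
  destruct (Dpp b (F a b)) as [H|[w' [E [E2 S]]]]; [exact H|].
  exfalso.
  destruct (Dpp a b) as [H1|[w0 [E0 [_ S0]]]].
  - rewrite H1 in E. injection E as Hab Hbw. subst a. subst w'.
    set (c := F b (F b b)) in *.
    destruct (Dpp c b) as [H3|[w3 [_ [_ S3]]]].
    + rewrite H3 in E2. assert (size (Nd c b) = size b) by (rewrite E2; reflexivity).
      simpl in H. lia.
    + rewrite E2 in S3. lia.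
  - rewrite E in S0. simpl in S0. lia.
Qed.

Lemma decA : forall a b, F b (Nd b (F a b)) = a.
Proof.
  intros a b. simpl.
  destruct (eqT b b) as [_|Hn]; [|congruence].
  destruct (F a b) as [|a0 r0] eqn:Ew.
  - destruct (Dpp a b) as [H1|[w0 [E0 [_ S0]]]].
    + congruence.
    + subst b. rewrite Ew. destruct (eqT At At); congruence.
  - destruct (eqT (F a0 b) (Nd a0 r0)) as [He|He].
    + apply (inj a0 a b). congruence.
    + destruct (Dpp a b) as [H1|[w0 [E0 [_ S0]]]].
      * rewrite Ew in H1. injection H1 as -> ->. congruence.
      * subst b. rewrite Ew. destruct (eqT (Nd a0 r0) (Nd a0 r0)); congruence.
Qed.

Theorem mainTheorem2 :
  exists (M : Type) (op : M -> M -> M), law1 op /\ ~ law2 op.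
Proof.
  exists T, (fun x y => F x y). split.
  - unfold law1. intros x y. rewrite noDec. symmetry. apply decA.
  - unfold law2. intros H. specialize (H At). vm_compute in H. discriminate H.
Qed.
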